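(* Consider $n$ parallel roads (indexed by $i\in[n]$) shared by $m$ vehicle types (indexed by $j\in[m]$), vehicle type $j$ having demand $\bar f^j\ge0$. A feasible routing is $f=(f^j_i)$ with $f^j_i\ge0$ and $\sum_i f^j_i=\bar f^j$ for each $j$. Road $i$ has latency $\ell_i(f)=b_i+\sum_j a^j_i f^j_i$ with constants $a^j_i\ge0$, $b_i\ge0$, and the social cost is $J(f)=\sum_i\big(\sum_j f^j_i\big)\ell_i(f)$. Then there exists a feasible routing $f$ minimizing $J$ such that no two distinct vehicle types $j\neq j'$ share more than one road with positive flow of both, i.e. there are no two distinct roads $i\neq i'$ with $f^j_i,f^{j'}_i,f^j_{i'},f^{j'}_{i'}>0$.
   Context: Parallel-road network with multiple vehicle types, affine road latencies with type-dependent coefficients, and social cost equal to total latency. *)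

(* Defs.v *)
From mathcomp Require Import all_boot all_order all_algebra.
From mathcomp Require Import reals.
Set Implicit Arguments. Unset Strict Implicit. Unset Printing Implicit Defensive.
Import Order.TTheory GRing.Theory Num.Theory.
Local Open Scope ring_scope.

(* A routing: f j i = flow of vehicle type j on road i. *)
Definition routing (R : realType) (n m : nat) := 'I_m -> 'I_n -> R.

Definition feasible (R : realType) (n m : nat) (fbar : 'I_m -> R)
  (f : routing R n m) : Prop :=
  (forall j i, 0 <= f j i) /\ (forall j, \sum_(i < n) f j i = fbar j).

Definition latency (R : realType) (n m : nat) (a : 'I_m -> 'I_n -> R)
  (b : 'I_n -> R) (f : routing R n m) (i : 'I_n) : R :=
  b i + \sum_(j < m) a j i * f j i.

Definition social_cost (R : realType) (n m : nat) (a : 'I_m -> 'I_n -> R)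
  (b : 'I_n -> R) (f : routing R n m) : R :=
  \sum_(i < n) (\sum_(j < m) f j i) * latency a b f i.

(* Main.v *)
Require Import Defs.
From mathcomp Require Import all_boot all_order all_algebra.
From mathcomp Require Import reals.
From mathcomp Require Import all_classical all_analysis.
From mathcomp Require Import lra ring.
Import Order.TTheory GRing.Theory Num.Theory.
Import numFieldNormedType.Exports.
Local Open Scope ring_scope.
Import ArrowAsProduct.


Section Comb.
Variables (R : realType) (n m : nat) (fbar : 'I_m -> R) (a : 'I_m -> 'I_n -> R) (b : 'I_n -> R).

Definition dir (j j' : 'I_m) (i i' : 'I_n) (k : 'I_m) (l : 'I_n) : R :=
  ((k == j)%:R - (k == j')%:R) * ((l == i')%:R - (l == i)%:R).

Definition sw (f : routing R n m) j j' i i' (e : R) : routing R n m :=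
  fun k l => f k l + e * dir j j' i i' k l.

Lemma sum_ind (T : finType) (x : T) : \sum_(y : T) ((y == x)%:R : R) = 1.
Proof. by rewrite (bigD1 x) //= eqxx big1 ?addr0 // => y /negbTE ->. Qed.

Lemma sw_row f j j' i i' e k : \sum_l sw f j j' i i' e k l = \sum_l f k l.
Proof.
rewrite /sw big_split /= -mulr_sumr /dir -mulr_sumr sumrB !sum_ind subrr.
by rewrite !mulr0 addr0.
Qed.

Lemma sw_col f j j' i i' e l : \sum_k sw f j j' i i' e k l = \sum_k f k l.
Proof.
rewrite /sw big_split /= -mulr_sumr /dir -mulr_suml sumrB !sum_ind subrr.
by rewrite !mul0r mulr0 addr0.
Qed.

Definition Cst (f : routing R n m) j j' i i' : R :=
  \sum_l (\sum_k f k l) * \sum_k a k l * dir j j' i i' k l.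

Lemma sw_cost f j j' i i' e :
  social_cost a b (sw f j j' i i' e) = social_cost a b f + e * Cst f j j' i i'.
Proof.
rewrite /social_cost /Cst mulr_sumr -big_split /=; apply: eq_bigr => l _.
rewrite sw_col /latency /sw.
have -> : \sum_k a k l * (f k l + e * dir j j' i i' k l) =
   \sum_k a k l * f k l + e * \sum_k a k l * dir j j' i i' k l.
  rewrite mulr_sumr -big_split /=; apply: eq_bigr => k _; ring.
ring.
Qed.

Lemma CstN f j j' i i' : Cst f j' j i i' = - Cst f j j' i i'.
Proof.
rewrite /Cst -sumrN; apply: eq_bigr => l _; rewrite -mulrN -sumrN.
congr (_ * _); apply: eq_bigr => k _; rewrite /dir; ring.
Qed.

Definition pos (f : routing R n m) := [set p : 'I_m * 'I_n | 0 < f p.1 p.2].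

Lemma reduce f j j' i i' : j != j' -> i != i' ->
  0 < f j i -> 0 < f j' i -> 0 < f j i' -> 0 < f j' i' ->
  Cst f j j' i i' <= 0 -> feasible fbar f ->
  exists g, [/\ feasible fbar g, social_cost a b g <= social_cost a b f &
     (#|pos g| < #|pos f|)%N].
Proof.
move=> hj hi h1 h2 h3 h4 hC [hf0 hfs].
pose e := if f j i <= f j' i' then f j i else f j' i'.
have he : 0 < e by rewrite /e; case: ifP.
have he1 : e <= f j i by rewrite /e; case: ifP => // /negbT; rewrite -ltNge => /ltW.
have he2 : e <= f j' i' by rewrite /e; case: ifP.
have dirv k l : [/\ (k == j) && (l == i) -> dir j j' i i' k l = -1,
   (k == j') && (l == i') -> dir j j' i i' k l = -1,
   ~~ ((k == j) && (l == i)) -> ~~ ((k == j') && (l == i')) -> 0 <= dir j j' i i' k l &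
   dir j j' i i' k l != 0 -> ((k == j) || (k == j')) && ((l == i) || (l == i'))].
  rewrite /dir; have [->|kj] := eqVneq k j.
    rewrite (negbTE hj) /=; have [->|li] := eqVneq l i.
      by rewrite (negbTE hi) /=; split => // _; lra.
    have [_|li2] := eqVneq l i'; split => //=; lra.
  have [_|kj2] := eqVneq k j' => /=.
    have [->|li] := eqVneq l i.
      by rewrite (negbTE hi) /=; split => //; lra.
    have [_|li2] := eqVneq l i'; split => //=; lra.
  by split => //; rewrite ?subrr ?mul0r ?eqxx.
exists (sw f j j' i i' e); split.
- split; last by move=> k; rewrite sw_row hfs.
  move=> k l; rewrite /sw.
  case: (boolP ((k == j) && (l == i))) => [/andP[/eqP-> /eqP->] | n1].
    have [d1 _ _ _] := dirv j i; rewrite d1 ?eqxx //; lra.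
  case: (boolP ((k == j') && (l == i'))) => [/andP[/eqP-> /eqP->] | n2].
    have [_ d2 _ _] := dirv j' i'; rewrite d2 ?eqxx //; lra.
  have [_ _ d3 _] := dirv k l.
  have := d3 n1 n2; have := hf0 k l; have := ltW he; nra.
- rewrite sw_cost; have := ltW he; nra.
- apply: proper_card; apply/fintype.properP; split.
    apply/fintype.subsetP => -[k l]; rewrite !inE /= /sw.
    have [_ _ _ d4] := dirv k l.
    case: (eqVneq (dir j j' i i' k l) 0) => [->|/d4]; first by rewrite mulr0 addr0.
    by case/andP => /orP[] /eqP -> /orP[] /eqP ->.
  rewrite /e; case: ifP => hle.
    exists (j, i); rewrite !inE //= /sw.
    have [d1 _ _ _] := dirv j i; rewrite d1 ?eqxx //; lra.
  exists (j', i'); rewrite !inE //= /sw.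
  have [_ d2 _ _] := dirv j' i'; rewrite d2 ?eqxx //; lra.
Qed.

End Comb.

Local Open Scope classical_set_scope.

Lemma cont_sum (R : realType) (T : topologicalType) (I : Type) (r : seq I)
  (F : I -> T -> R) : (forall i, continuous (F i)) ->
  continuous (fun x => \sum_(i <- r) F i x).
Proof.
move=> h; elim: r => [|i r IH].
  under eq_fun do rewrite big_nil; exact: cst_continuous.
under eq_fun do rewrite big_cons.
by move=> x; apply: continuousD; [exact: h | exact: IH].
Qed.

Lemma cont_mul (R : realType) (T : topologicalType) (s t : T -> R) :
  continuous s -> continuous t -> continuous (fun x => s x * t x).
Proof. by move=> hs ht x; apply: continuousM; [exact: hs | exact: ht]. Qed.

Lemma cont_add (R : realType) (T : topologicalType) (s t : T -> R) :
  continuous s -> continuous t -> continuous (fun x => s x + t x).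
Proof. by move=> hs ht x; apply: continuousD; [exact: hs | exact: ht]. Qed.

Lemma exists_min (R : realType) (n m : nat)
  (fbar : 'I_m -> R) (a : 'I_m -> 'I_n -> R) (b : 'I_n -> R)
  (hfeas : exists f : routing R n m, feasible fbar f) :
  exists f : routing R n m, feasible fbar f /\
    (forall g : routing R n m, feasible fbar g ->
           social_cost a b f <= social_cost a b g).
Proof.
pose T := ('I_m * 'I_n)%type -> R.
pose toF (g : T) : routing R n m := fun j i => g (j, i).
pose ofF (f : routing R n m) : T := fun p => f p.1 p.2.
pose A := [set g : T | feasible fbar (toF g)].
have cproj p : continuous (fun g : T => g p) := @proj_continuous _ (fun _ => R) p.
have A0 : A !=set0.
  by case: hfeas => f hf; exists (ofF f).
have Acl : closed A.
  have -> : A = (\bigcap_(p in setT) [set g : T | 0 <= g p]) `&`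
      (\bigcap_(j in setT) [set g : T | \sum_(i < n) g (j, i) = fbar j]).
    apply/seteqP; split => g /=.
      by case => h1 h2; split => [p _|j _ /=]; [case: p => j i; exact: h1 | exact: h2].
    by case => h1 h2; split => [j i|j]; [exact: (h1 (j, i)) | exact: h2].
  apply: closedI; apply: closed_bigI => p _.
    have := @preimage_closed _ R (fun g : T => g p) [set x | 0 <= x].
    apply; [by move=> x _; exact: cproj | exact: closed_ge].
  have := @preimage_closed _ R (fun g : T => \sum_(i < n) g (p, i)) [set x | x = fbar p].
  apply; last exact: closed_eq.
  by move=> x _; apply: cont_sum => i; exact: cproj.
have Acp : compact A.
  have B : compact [set g : T | forall p, `[0, fbar p.1]%classic (g p)].
    have := (@tychonoff (prod (ordinal m) (ordinal n) : eqType) (fun _ => R) (fun p => `[0, fbar p.1]%classic) (fun p => @segment_compact R 0 (fbar p.1))).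
    move=> H; exact H.
  apply: (subclosed_compact Acl B) => g [h1 h2] p /=.
  rewrite in_itv /=; case: p => j i /=; rewrite h1 /= -(h2 j).
  rewrite (bigD1 i) //= lerDl; apply: sumr_ge0 => k _; exact: h1.
have cJ : continuous (fun g : T => social_cost a b (toF g)).
  rewrite /social_cost /latency /toF.
  apply: cont_sum => i; apply: cont_mul.
    by apply: cont_sum => j; exact: cproj.
  apply: cont_add; first exact: cst_continuous.
  apply: cont_sum => j; apply: cont_mul; first exact: cst_continuous.
  exact: cproj.
have [c cA cmin] := compact_EVT_min A0 Acp (continuous_subspaceT cJ).
exists (toF c); split; first by move: cA; rewrite inE.
move=> g hg; have := cmin (ofF g); rewrite inE; apply.
by rewrite /A /=; case: hg.
Qed.

Theorem corollary1 (R : realType) (n m : nat)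
  (fbar : 'I_m -> R) (a : 'I_m -> 'I_n -> R) (b : 'I_n -> R)
  (hfbar : forall j, 0 <= fbar j)
  (ha : forall j i, 0 <= a j i) (hb : forall i, 0 <= b i)
  (hfeas : exists f : routing R n m, feasible fbar f) :
  exists f : routing R n m,
    [/\ feasible fbar f,
        (forall g : routing R n m, feasible fbar g ->
           social_cost a b f <= social_cost a b g) &
        (forall (j j' : 'I_m) (i i' : 'I_n), j != j' -> i != i' ->
           ~ [/\ 0 < f j i, 0 < f j' i, 0 < f j i' & 0 < f j' i'])].
Proof.
have [f0 [hf0 hmin0]] := @exists_min R n m fbar a b hfeas.
suff: forall k (f : routing R n m), (#|@pos R n m f| <= k)%N -> feasible fbar f ->
    (forall g, feasible fbar g -> social_cost a b f <= social_cost a b g) ->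
  exists f : routing R n m,
    [/\ feasible fbar f,
        (forall g : routing R n m, feasible fbar g ->
           social_cost a b f <= social_cost a b g) &
        (forall (j j' : 'I_m) (i i' : 'I_n), j != j' -> i != i' ->
           ~ [/\ 0 < f j i, 0 < f j' i, 0 < f j i' & 0 < f j' i'])].
  by move=> /(_ _ f0 (leqnn _) hf0 hmin0).
elim=> [|k IH] f hk hf hmin;
  (case: (pselect (exists f : routing R n m,
    [/\ feasible fbar f,
        (forall g : routing R n m, feasible fbar g ->
           social_cost a b f <= social_cost a b g) &
        (forall (j j' : 'I_m) (i i' : 'I_n), j != j' -> i != i' ->
           ~ [/\ 0 < f j i, 0 < f j' i, 0 < f j i' & 0 < f j' i'])])) => // Hno;
  exists f; split => // j j' i i' hj hi [h1 h2 h3 h4];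
  have [g [hg hJ hc]] : exists g, [/\ feasible fbar g,
     social_cost a b g <= social_cost a b f & (#|@pos R n m g| < #|@pos R n m f|)%N];
  [ case: (lerP (@Cst R n m a f j j' i i') 0) => hC;
    [ exact: (@reduce R n m fbar a b f j j' i i')
    | apply: (@reduce R n m fbar a b f j' j i i') => //;
      [ by rewrite eq_sym | rewrite CstN oppr_le0; exact: ltW ] ]
  | ]).
  by move: (leq_trans hc hk).
apply: Hno; apply: (IH g) => //.
  by rewrite -ltnS; exact: leq_trans hc hk.
by move=> h hh; apply: le_trans hJ (hmin h hh).
Qed.
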